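(* For a linear-non-linear adjunction $\mathcal F\dashv\mathcal U$ and objects $X,J$ of $\mathscr C$, the functor $\Sigma_{(X,J)}:LS(\mathscr C)_{X\times J}\to LS(\mathscr C)_X$ is left adjoint to the reindexing functor $\pi_1^*:LS(\mathscr C)_X\to LS(\mathscr C)_{X\times J}$ along $\pi_1:X\times J\to X$, with unit $\nu_{(X\times J,A)}:=(\mathrm{id}_{X\times J},(m^{-1}_{X,J}\otimes\mathrm{id}_A);(\mathbf w_X\otimes\mathrm{id}_{\mathcal F(J)\otimes A})):(X\times J,A)\to(X\times J,\mathcal F(J)\otimes A)$ and counit $\mu_{(X,A)}:=(\mathrm{id}_X,\mathbf w_X\otimes\mathbf w_J\otimes\mathrm{id}_A):(X,\mathcal F(J)\otimes A)\to(X,A)$.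
   Context: Composition is diagrammatic; monoidal categories are strict. A linear-non-linear adjunction is a symmetric monoidal adjunction $\mathcal F\dashv\mathcal U$, $\mathcal F:\mathscr C\to\mathcal L$, between a cartesian $(\mathscr C,\times,I)$ and a symmetric monoidal $(\mathcal L,\otimes,1)$ (symmetry $\sigma$), with $\mathcal F$ strong monoidal via isomorphisms $m_{X,Y}:\mathcal F(X)\otimes\mathcal F(Y)\to\mathcal F(X\times Y)$, $m_1:1\to\mathcal F(I)$. $\mathbf c_X:=\mathcal F(\Delta_X);m_{X,X}^{-1}$, $\mathbf w_X:=\mathcal F(t_X);m_1^{-1}$ ($t_X:X\to I$ terminal). $LS(\mathscr C)$: objects $(X,A)$ with $X\in\mathscr C$, $A\in\mathcal L$; morphisms $(f,u):(X,A)\to(Y,B)$ with $f:X\to Y$, $u:\mathcal F(X)\otimes A\to B$; composition $(f,u);(g,v)=(f;g,(\mathbf c_X\otimes\mathrm{id}_A);(\mathcal F(f)\otimes u);v)$; identity $(\mathrm{id}_X,\mathbf w_X\otimes\mathrm{id}_A)$. The fibre $LS(\mathscr C)_X$ has objects $(X,A)$ and morphisms $(\mathrm{id}_X,u)$. For $f:X'\to X$, the reindexing $f^*:LS(\mathscr C)_X\to LS(\mathscr C)_{X'}$ is $(X,B)\mapsto(X',B)$, $(\mathrm{id}_X,v)\mapsto(\mathrm{id}_{X'},(\mathcal F(f)\otimes\mathrm{id}_B);v)$. $\Sigma_{(X,J)}$: on objects $(X\times J,A)\mapsto(X,\mathcal F(J)\otimes A)$; on $(\mathrm{id}_{X\times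 J},u):(X\times J,A)\to(X\times J,B)$ it gives $(\mathrm{id}_X,(\mathrm{id}_{\mathcal F(X)}\otimes\mathbf c_J\otimes\mathrm{id}_A);(\sigma_{\mathcal F(X),\mathcal F(J)}\otimes\mathrm{id}_{\mathcal F(J)\otimes A});(\mathrm{id}_{\mathcal F(J)}\otimes((m_{X,J}\otimes\mathrm{id}_A);u)))$. *)

(* Defs.v *)
Set Implicit Arguments.
Unset Strict Implicit.

(* Composition is diagrammatic: ccomp f g = f;g.                        *)
Record cartesian_cat := CartesianCat {
  Ob : Type;
  Hom : Ob -> Ob -> Type;
  cid : forall X, Hom X X;
  ccomp : forall X Y Z, Hom X Y -> Hom Y Z -> Hom X Z;
  cprod : Ob -> Ob -> Ob;
  cp1 : forall X Y, Hom (cprod X Y) X;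
  cp2 : forall X Y, Hom (cprod X Y) Y;
  cpair : forall Z X Y, Hom Z X -> Hom Z Y -> Hom Z (cprod X Y);
  cterm : Ob;
  cbang : forall X, Hom X cterm;
  ccomp_idl : forall X Y (f : Hom X Y), ccomp (cid X) f = f;
  ccomp_idr : forall X Y (f : Hom X Y), ccomp f (cid Y) = f;
  ccompA : forall X Y Z W (f : Hom X Y) (g : Hom Y Z) (h : Hom Z W),
      ccomp (ccomp f g) h = ccomp f (ccomp g h);
  cpair_p1 : forall Z X Y (f : Hom Z X) (g : Hom Z Y), ccomp (cpair f g) (cp1 X Y) = f;
  cpair_p2 : forall Z X Y (f : Hom Z X) (g : Hom Z Y), ccomp (cpair f g) (cp2 X Y) = g;
  cpair_uniq : forall Z X Y (h : Hom Z (cprod X Y)),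
      cpair (ccomp h (cp1 X Y)) (ccomp h (cp2 X Y)) = h;
  cbang_uniq : forall X (f : Hom X cterm), f = cbang X
}.

Arguments Hom : clear implicits.
Arguments cprod : clear implicits.
Arguments cid {C} X : rename.
Arguments ccomp {C X Y Z} f g : rename.
Arguments cp1 {C} X Y : rename.
Arguments cp2 {C} X Y : rename.
Arguments cpair {C Z X Y} f g : rename.
Arguments cterm {C} : rename.
Arguments cbang {C} X : rename.

Section CartesianDerived.
Variable C : cartesian_cat.
Definition cprodm (X Y X' Y' : Ob C) (f : Hom C X X') (g : Hom C Y Y')
  : Hom C (cprod C X Y) (cprod C X' Y') :=
  cpair (ccomp (cp1 X Y) f) (ccomp (cp2 X Y) g).
Definition cdiag (X : Ob C) : Hom C X (cprod C X X) := cpair (cid X) (cid X).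
Definition cassoc (X Y Z : Ob C)
  : Hom C (cprod C (cprod C X Y) Z) (cprod C X (cprod C Y Z)) :=
  cpair (ccomp (cp1 _ _) (cp1 X Y))
        (cpair (ccomp (cp1 _ _) (cp2 X Y)) (cp2 _ Z)).
Definition cswap (X Y : Ob C) : Hom C (cprod C X Y) (cprod C Y X) :=
  cpair (cp2 X Y) (cp1 X Y).
End CartesianDerived.

(* Strict symmetric monoidal categories, presented by their arrows      *)
(* (dom/cod), so that strictness is plain equality of objects/arrows.   *)
(* lcomp f g = f;g is meaningful when lcod f = ldom g.                  *)
Record smcat := SMCat {
  LOb : Type;
  LAr : Type;
  ldom : LAr -> LOb;
  lcod : LAr -> LOb;
  lid : LOb -> LAr;
  lcomp : LAr -> LAr -> LAr;
  tens : LOb -> LOb -> LOb;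
  tensA : LAr -> LAr -> LAr;
  lunit : LOb;
  lsym : LOb -> LOb -> LAr;
  ldom_id : forall a, ldom (lid a) = a;
  lcod_id : forall a, lcod (lid a) = a;
  ldom_comp : forall f g, lcod f = ldom g -> ldom (lcomp f g) = ldom f;
  lcod_comp : forall f g, lcod f = ldom g -> lcod (lcomp f g) = lcod g;
  lcomp_idl : forall f, lcomp (lid (ldom f)) f = f;
  lcomp_idr : forall f, lcomp f (lid (lcod f)) = f;
  lcompA : forall f g h, lcod f = ldom g -> lcod g = ldom h ->
      lcomp (lcomp f g) h = lcomp f (lcomp g h);
  ldom_tens : forall f g, ldom (tensA f g) = tens (ldom f) (ldom g);
  lcod_tens : forall f g, lcod (tensA f g) = tens (lcod f) (lcod g);
  tens_id : forall a b, tensA (lid a) (lid b) = lid (tens a b);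
  tens_comp : forall f g f' g', lcod f = ldom g -> lcod f' = ldom g' ->
      tensA (lcomp f g) (lcomp f' g') = lcomp (tensA f f') (tensA g g');
  tens_assoc : forall a b c, tens (tens a b) c = tens a (tens b c);
  tens_unitl : forall a, tens lunit a = a;
  tens_unitr : forall a, tens a lunit = a;
  tensA_assoc : forall f g h, tensA (tensA f g) h = tensA f (tensA g h);
  tensA_unitl : forall f, tensA (lid lunit) f = f;
  tensA_unitr : forall f, tensA f (lid lunit) = f;
  ldom_sym : forall a b, ldom (lsym a b) = tens a b;
  lcod_sym : forall a b, lcod (lsym a b) = tens b a;
  lsym_nat : forall f g,
      lcomp (tensA f g) (lsym (lcod f) (lcod g)) = lcomp (lsym (ldom f) (ldom g)) (tensA g f);
  lsym_inv : forall a b, lcomp (lsym a b) (lsym b a) = lid (tens a b);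
  lsym_hex : forall a b c,
      lsym a (tens b c) = lcomp (tensA (lsym a b) (lid c)) (tensA (lid b) (lsym a c))
}.

Arguments LOb : clear implicits.
Arguments LAr : clear implicits.
Arguments ldom {L} f : rename.
Arguments lcod {L} f : rename.
Arguments lid {L} a : rename.
Arguments lcomp {L} f g : rename.
Arguments tens {L} a b : rename.
Arguments tensA {L} f g : rename.
Arguments lunit {L} : rename.
Arguments lsym {L} a b : rename.

(* Linear-non-linear adjunction F -| U : L -> C, F strong symmetric    *)
(* monoidal via m, m1; the adjunction is given by the universal counit. *)
Record lnl (C : cartesian_cat) (L : smcat) := LNL {
  Fo : Ob C -> LOb L;
  Fm : forall X Y : Ob C, Hom C X Y -> LAr L;
  Fm_dom : forall X Y (f : Hom C X Y), ldom (Fm f) = Fo X;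
  Fm_cod : forall X Y (f : Hom C X Y), lcod (Fm f) = Fo Y;
  Fm_id : forall X, Fm (cid X) = lid (Fo X);
  Fm_comp : forall X Y Z (f : Hom C X Y) (g : Hom C Y Z),
      Fm (ccomp f g) = lcomp (Fm f) (Fm g);
  mm : Ob C -> Ob C -> LAr L;
  mminv : Ob C -> Ob C -> LAr L;
  mm_dom : forall X Y, ldom (mm X Y) = tens (Fo X) (Fo Y);
  mm_cod : forall X Y, lcod (mm X Y) = Fo (cprod C X Y);
  mminv_dom : forall X Y, ldom (mminv X Y) = Fo (cprod C X Y);
  mminv_cod : forall X Y, lcod (mminv X Y) = tens (Fo X) (Fo Y);
  mm_mminv : forall X Y, lcomp (mm X Y) (mminv X Y) = lid (tens (Fo X) (Fo Y));
  mminv_mm : forall X Y, lcomp (mminv X Y) (mm X Y) = lid (Fo (cprod C X Y));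
  m1 : LAr L;
  m1inv : LAr L;
  m1_dom : ldom m1 = lunit;
  m1_cod : lcod m1 = Fo cterm;
  m1inv_dom : ldom m1inv = Fo cterm;
  m1inv_cod : lcod m1inv = lunit;
  m1_m1inv : lcomp m1 m1inv = lid lunit;
  m1inv_m1 : lcomp m1inv m1 = lid (Fo cterm);
  mm_nat : forall X Y X' Y' (f : Hom C X X') (g : Hom C Y Y'),
      lcomp (tensA (Fm f) (Fm g)) (mm X' Y') = lcomp (mm X Y) (Fm (cprodm f g));
  mm_assoc : forall X Y Z,
      lcomp (lcomp (tensA (mm X Y) (lid (Fo Z))) (mm (cprod C X Y) Z)) (Fm (cassoc X Y Z))
      = lcomp (tensA (lid (Fo X)) (mm Y Z)) (mm X (cprod C Y Z));
  mm_unitl : forall X,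
      lcomp (lcomp (tensA m1 (lid (Fo X))) (mm cterm X)) (Fm (cp2 cterm X)) = lid (Fo X);
  mm_unitr : forall X,
      lcomp (lcomp (tensA (lid (Fo X)) m1) (mm X cterm)) (Fm (cp1 X cterm)) = lid (Fo X);
  mm_sym : forall X Y,
      lcomp (lsym (Fo X) (Fo Y)) (mm Y X) = lcomp (mm X Y) (Fm (cswap X Y));
  Uo : LOb L -> Ob C;
  ceps : LOb L -> LAr L;
  ceps_dom : forall a, ldom (ceps a) = Fo (Uo a);
  ceps_cod : forall a, lcod (ceps a) = a;
  ceps_univ : forall (X : Ob C) (a : LOb L) (g : LAr L),
      ldom g = Fo X -> lcod g = a ->
      exists f : Hom C X (Uo a),
        lcomp (Fm f) (ceps a) = g /\
        forall f' : Hom C X (Uo a), lcomp (Fm f') (ceps a) = g -> f' = f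
}.

Arguments Fo {C L} A X : rename.
Arguments Fm {C L} A {X Y} f : rename.
Arguments mm {C L} A X Y : rename.
Arguments mminv {C L} A X Y : rename.
Arguments m1 {C L} A : rename.
Arguments m1inv {C L} A : rename.

(* has_type f A B : f is a morphism A -> B; pcomp A B C f g = f;g.     *)
Record precat := PreCat {
  pob : Type;
  phom : Type;
  has_type : phom -> pob -> pob -> Prop;
  pid : pob -> phom;
  pcomp : pob -> pob -> pob -> phom -> phom -> phom
}.
Arguments has_type {P} f A B : rename.
Arguments pid {P} A : rename.
Arguments pcomp {P} A B C f g : rename.

Record prefunctor (P Q : precat) := PreFunctor {
  fob : pob P -> pob Q;
  fhom : pob P -> pob P -> phom P -> phom Q
}.
Arguments fob {P Q} F A : rename.
Arguments fhom {P Q} F A B f : rename.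

Definition is_functor (P Q : precat) (F : prefunctor P Q) : Prop :=
  (forall A B f, has_type f A B -> has_type (fhom F A B f) (fob F A) (fob F B)) /\
  (forall A, fhom F A A (pid A) = pid (fob F A)) /\
  (forall A B C f g, has_type f A B -> has_type g B C ->
     fhom F A C (pcomp A B C f g)
     = pcomp (fob F A) (fob F B) (fob F C) (fhom F A B f) (fhom F B C g)).

Definition is_adjunction (P Q : precat) (Fl : prefunctor P Q) (G : prefunctor Q P)
    (eta : pob P -> phom P) (eps : pob Q -> phom Q) : Prop :=
  is_functor Fl /\ is_functor G /\
  (forall A, has_type (eta A) A (fob G (fob Fl A))) /\
  (forall B, has_type (eps B) (fob Fl (fob G B)) B) /\
  (forall A A' f, has_type f A A' ->
     pcomp A A' (fob G (fob Fl A')) f (eta A')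
     = pcomp A (fob G (fob Fl A)) (fob G (fob Fl A')) (eta A)
         (fhom G (fob Fl A) (fob Fl A') (fhom Fl A A' f))) /\
  (forall B B' g, has_type g B B' ->
     pcomp (fob Fl (fob G B)) (fob Fl (fob G B')) B'
         (fhom Fl (fob G B) (fob G B') (fhom G B B' g)) (eps B')
     = pcomp (fob Fl (fob G B)) B B' (eps B) g) /\
  (forall A, pcomp (fob Fl A) (fob Fl (fob G (fob Fl A))) (fob Fl A)
               (fhom Fl A (fob G (fob Fl A)) (eta A)) (eps (fob Fl A))
             = pid (fob Fl A)) /\
  (forall B, pcomp (fob G B) (fob G (fob Fl (fob G B))) (fob G B)
               (eta (fob G B)) (fhom G (fob Fl (fob G B)) B (eps B))
             = pid (fob G B)).

Section LS.
Variables (C : cartesian_cat) (L : smcat) (Ad : lnl C L).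

Local Notation "f ;; g" := (lcomp f g) (at level 40, left associativity).
Local Notation "f ** g" := (tensA f g) (at level 35, right associativity).
Local Notation F := (Fo Ad).

Definition cmap (X : Ob C) : LAr L := Fm Ad (cdiag X) ;; mminv Ad X X.
Definition wmap (X : Ob C) : LAr L := Fm Ad (cbang X) ;; m1inv Ad.

(* LS(C): a morphism (f,u) : (X,A) -> (Y,B) is f : X -> Y with
   u : F(X) (x) A -> B.  Second component of (f,u);(g,v): *)
Definition LS_comp_snd (X Y : Ob C) (A : LOb L) (f : Hom C X Y) (u v : LAr L) : LAr L :=
  (cmap X ** lid A) ;; (Fm Ad f ** u) ;; v.
Definition LS_id_snd (X : Ob C) (A : LOb L) : LAr L := wmap X ** lid A.

(* The fibre LS(C)_X: objects (X,A) (identified with A), morphisms (id_X,u)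
   (identified with u); composition and identities are those of LS(C). *)
Definition LSfib (X : Ob C) : precat :=
  {| pob := LOb L;
     phom := LAr L;
     has_type := fun (u : LAr L) (A B : LOb L) => ldom u = tens (F X) A /\ lcod u = B;
     pid := LS_id_snd X;
     pcomp := fun (A _ _ : LOb L) (u v : LAr L) => LS_comp_snd A (cid X) u v |}.

Definition reindex (X' X : Ob C) (f : Hom C X' X) : prefunctor (LSfib X) (LSfib X') :=
  @PreFunctor (LSfib X) (LSfib X')
    (fun B : LOb L => B)
    (fun (B _ : LOb L) (v : LAr L) => (Fm Ad f ** lid B) ;; v).

Definition Sigma (X J : Ob C) : prefunctor (LSfib (cprod C X J)) (LSfib X) :=
  @PreFunctor (LSfib (cprod C X J)) (LSfib X)
    (fun A : LOb L => tens (F J) A)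
    (fun (A _ : LOb L) (u : LAr L) =>
       (lid (F X) ** cmap J ** lid A)
       ;; (lsym (F X) (F J) ** lid (tens (F J) A))
       ;; (lid (F J) ** ((mm Ad X J ** lid A) ;; u))).

Definition nu (X J : Ob C) (A : LOb L) : LAr L :=
  (mminv Ad X J ** lid A) ;; (wmap X ** lid (tens (F J) A)).

Definition mu (X J : Ob C) (A : LOb L) : LAr L :=
  wmap X ** wmap J ** lid A.

End LS.

(* Main.v *)
Require Import Defs.
From Stdlib Require Import Setoid.
Set Implicit Arguments.
Unset Strict Implicit.

Notation "f ;; g" := (lcomp f g) (at level 40, left associativity).
Notation "f ** g" := (tensA f g) (at level 35, right associativity).

Ltac dcextra := fail.

Ltac dcstep tc := first
 [ rewrite ldom_tens | rewrite lcod_tens | rewrite ldom_id | rewrite lcod_id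
 | rewrite ldom_sym | rewrite lcod_sym
 | rewrite Fm_dom | rewrite Fm_cod | rewrite mm_dom | rewrite mm_cod
 | rewrite mminv_dom | rewrite mminv_cod | rewrite m1_dom | rewrite m1_cod
 | rewrite m1inv_dom | rewrite m1inv_cod
 | rewrite ldom_comp by tc | rewrite lcod_comp by tc
 | dcextra
 | match goal with H : ldom ?f = _ |- context [ldom ?f] => rewrite H end
 | match goal with H : lcod ?f = _ |- context [lcod ?f] => rewrite H end ].

Ltac tc := repeat (dcstep tc); rewrite ?tens_assoc, ?tens_unitl, ?tens_unitr; reflexivity.

Section SM.
Variable L : smcat.
Implicit Types f g h k : LAr L.
Implicit Types a b c : LOb L.

Lemma idl f a : ldom f = a -> lid a ;; f = f.
Proof. intros <-; apply lcomp_idl. Qed.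
Lemma idr f a : lcod f = a -> f ;; lid a = f.
Proof. intros <-; apply lcomp_idr. Qed.

Lemma tens_splitl f g : f ** g = (f ** lid (ldom g)) ;; (lid (lcod f) ** g).
Proof. rewrite <- tens_comp by tc. rewrite idr, idl by tc. reflexivity. Qed.
Lemma tens_splitr f g : f ** g = (lid (ldom f) ** g) ;; (f ** lid (lcod g)).
Proof. rewrite <- tens_comp by tc. rewrite idr, idl by tc. reflexivity. Qed.

Lemma tens_merge f g h k : lcod f = ldom h -> lcod g = ldom k ->
  (f ** g) ;; (h ** k) = (f ;; h) ** (g ;; k).
Proof. intros; rewrite tens_comp by tc; reflexivity. Qed.

Lemma lid_tens a b : lid (tens a b) = lid a ** lid b.
Proof. rewrite tens_id; reflexivity. Qed.

Lemma sym_unit_r a : lsym a lunit = lid a.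
Proof.
  assert (H := lsym_hex a lunit lunit).
  rewrite !tensA_unitr, tensA_unitl, tens_unitr in H.
  (* H : s = s ;; s *)
  assert (H2 := lsym_inv a lunit).
  rewrite tens_unitr in H2.
  rewrite <- H2. rewrite H at 2. rewrite lcompA by tc. rewrite H2.
  rewrite idr by tc. reflexivity.
Qed.

Lemma sym_unit_l a : lsym lunit a = lid a.
Proof.
  assert (H2 := lsym_inv a lunit). rewrite sym_unit_r, tens_unitr in H2.
  rewrite idl in H2 by tc. exact H2.
Qed.

End SM.

Lemma tens_compl (L : smcat) (f g : LAr L) a : lcod f = ldom g ->
  (f ;; g) ** lid a = (f ** lid a) ;; (g ** lid a).
Proof. intros; rewrite <- tens_comp by tc. rewrite idl by tc. reflexivity. Qed.
Lemma tens_compr (L : smcat) (f g : LAr L) a : lcod f = ldom g ->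
  lid a ** (f ;; g) = (lid a ** f) ;; (lid a ** g).
Proof. intros; rewrite <- tens_comp by tc. rewrite idl by tc. reflexivity. Qed.

Lemma pre2 (L : smcat) (a b r Z : LAr L) : a ;; b = r -> lcod Z = ldom a -> lcod a = ldom b ->
  Z ;; a ;; b = Z ;; r.
Proof. intros H ? ?. rewrite lcompA by tc. rewrite H. reflexivity. Qed.
Lemma pre3 (L : smcat) (a b c r Z : LAr L) : a ;; b ;; c = r -> lcod Z = ldom a -> lcod a = ldom b ->
  lcod b = ldom c -> Z ;; a ;; b ;; c = Z ;; r.
Proof. intros H ? ? ?. rewrite (lcompA (f := Z ;; a)) by tc. rewrite lcompA by tc.
  rewrite <- (lcompA (f := a)) by tc. rewrite H. reflexivity. Qed.
Lemma iso_cancel_r (L : smcat) (f g h h' : LAr L) : ldom h' = lcod h -> h ;; h' = lid (ldom h) ->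
  lcod f = ldom h -> lcod g = ldom h -> f ;; h = g ;; h -> f = g.
Proof. intros Hh' Hh Hf Hg H. rewrite <- (idr Hf), <- (idr Hg), <- Hh.
  rewrite <- !lcompA by tc. rewrite H. reflexivity. Qed.
Lemma iso_cancel_l (L : smcat) (f g h h' : LAr L) : lcod h' = ldom h -> h' ;; h = lid (lcod h) ->
  ldom f = lcod h -> ldom g = lcod h -> h ;; f = h ;; g -> f = g.
Proof. intros Hh' Hh Hf Hg H. rewrite <- (idl Hf), <- (idl Hg), <- Hh.
  rewrite !lcompA by tc. rewrite H. reflexivity. Qed.

Lemma xch (L : smcat) (u g : LAr L) a b : ldom g = a -> lcod u = b ->
  (lid a ** u) ;; (g ** lid b) = (g ** lid (ldom u)) ;; (lid (lcod g) ** u).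
Proof. intros. rewrite !tens_merge by tc. rewrite idl, idr, idr, idl by tc. reflexivity. Qed.

Section Cart.
Variable C : cartesian_cat.
Lemma comp_pair Z' Z X Y (h : Hom C Z' Z) (f : Hom C Z X) (g : Hom C Z Y) :
  ccomp h (cpair f g) = cpair (ccomp h f) (ccomp h g).
Proof. rewrite <- (cpair_uniq (ccomp h (cpair f g))), !ccompA, cpair_p1, cpair_p2. reflexivity. Qed.
Lemma pair_ext Z X Y (f g : Hom C Z (cprod C X Y)) :
  ccomp f (cp1 X Y) = ccomp g (cp1 X Y) -> ccomp f (cp2 X Y) = ccomp g (cp2 X Y) -> f = g.
Proof. intros H1 H2. rewrite <- (cpair_uniq f), <- (cpair_uniq g), H1, H2. reflexivity. Qed.
Lemma cpair_p1' Z X Y W (f : Hom C Z X) (g : Hom C Z Y) (h : Hom C X W) :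
  ccomp (cpair f g) (ccomp (cp1 X Y) h) = ccomp f h.
Proof. rewrite <- ccompA, cpair_p1. reflexivity. Qed.
Lemma cpair_p2' Z X Y W (f : Hom C Z X) (g : Hom C Z Y) (h : Hom C Y W) :
  ccomp (cpair f g) (ccomp (cp2 X Y) h) = ccomp g h.
Proof. rewrite <- ccompA, cpair_p2. reflexivity. Qed.
Definition ainv (X Y Z : Ob C) : Hom C (cprod C X (cprod C Y Z)) (cprod C (cprod C X Y) Z) :=
  cpair (cpair (cp1 _ _) (ccomp (cp2 _ _) (cp1 Y Z))) (ccomp (cp2 _ _) (cp2 Y Z)).
End Cart.

Ltac cart := unfold cprodm, cdiag, cassoc, cswap, ainv in *;
  repeat (first [rewrite ccompA | rewrite comp_pair | rewrite cpair_p1 | rewrite cpair_p2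
     | rewrite cpair_p1' | rewrite cpair_p2' | rewrite ccomp_idl | rewrite ccomp_idr]);
  first [reflexivity | apply pair_ext; cart].

Lemma test (C : cartesian_cat) (X Y Z : Ob C) : ccomp (cassoc X Y Z) (ainv X Y Z) = cid _.
Proof. cart. Qed.

Lemma wmap_dom C L (Ad : lnl C L) X : ldom (wmap Ad X) = Fo Ad X.
Proof. unfold wmap. tc. Qed.
Lemma wmap_cod C L (Ad : lnl C L) X : lcod (wmap Ad X) = lunit.
Proof. unfold wmap. tc. Qed.
Lemma cmap_dom C L (Ad : lnl C L) X : ldom (cmap Ad X) = Fo Ad X.
Proof. unfold cmap. tc. Qed.
Lemma cmap_cod C L (Ad : lnl C L) X : lcod (cmap Ad X) = tens (Fo Ad X) (Fo Ad X).
Proof. unfold cmap. tc. Qed.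

Ltac dcextra ::= first [rewrite wmap_dom | rewrite wmap_cod | rewrite cmap_dom | rewrite cmap_cod].

Section LNL.
Variables (C : cartesian_cat) (L : smcat) (Ad : lnl C L).
Local Notation F := (Fo Ad).
Local Notation Fm := (Fm Ad).
Local Notation m := (mm Ad).
Local Notation mi := (mminv Ad).
Local Notation w := (wmap Ad).
Local Notation c := (cmap Ad).

Lemma mi_nat (X Y X' Y' : Ob C) (f : Hom C X X') (g : Hom C Y Y') :
  mi X Y ;; (Fm f ** Fm g) = Fm (cprodm f g) ;; mi X' Y'.
Proof.
  transitivity (mi X Y ;; (Fm f ** Fm g) ;; lid (tens (F X') (F Y'))).
  { rewrite idr by tc. reflexivity. }
  rewrite <- mm_mminv. rewrite <- lcompA by tc. rewrite (lcompA (f:=mi X Y)) by tc.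
  rewrite mm_nat. rewrite <- lcompA by tc. rewrite mminv_mm, idl by tc. reflexivity.
Qed.

Lemma m_p1_term (X : Ob C) : m X cterm ;; Fm (cp1 X cterm) = lid (F X) ** m1inv Ad.
Proof.
  transitivity ((lid (F X) ** m1inv Ad) ;; (((lid (F X) ** m1 Ad) ;; m X cterm) ;; Fm (cp1 X cterm))).
  2:{ rewrite mm_unitr. rewrite idr by tc. reflexivity. }
  rewrite <- !lcompA by tc. rewrite <- tens_comp by tc. rewrite m1inv_m1, idl by tc.
  rewrite tens_id, idl by tc. reflexivity.
Qed.

Lemma m_p2_term (X : Ob C) : m cterm X ;; Fm (cp2 cterm X) = m1inv Ad ** lid (F X).
Proof.
  transitivity ((m1inv Ad ** lid (F X)) ;; (((m1 Ad ** lid (F X)) ;; m cterm X) ;; Fm (cp2 cterm X))).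
  2:{ rewrite mm_unitl. rewrite idr by tc. reflexivity. }
  rewrite <- !lcompA by tc. rewrite <- tens_comp by tc. rewrite m1inv_m1, idl by tc.
  rewrite tens_id, idl by tc. reflexivity.
Qed.

Lemma m_p1 (X Y : Ob C) : m X Y ;; Fm (cp1 X Y) = lid (F X) ** w Y.
Proof.
  replace (cp1 X Y) with (ccomp (cprodm (cid X) (cbang Y)) (cp1 X cterm)) by cart.
  rewrite Fm_comp, <- lcompA by tc. rewrite <- mm_nat, Fm_id.
  rewrite lcompA by tc. rewrite m_p1_term. rewrite <- tens_comp by tc.
  rewrite idl by tc. reflexivity.
Qed.

Lemma m_p2 (X Y : Ob C) : m X Y ;; Fm (cp2 X Y) = w X ** lid (F Y).
Proof.
  replace (cp2 X Y) with (ccomp (cprodm (cbang X) (cid Y)) (cp2 cterm Y)) by cart.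
  rewrite Fm_comp, <- lcompA by tc. rewrite <- mm_nat, Fm_id.
  rewrite lcompA by tc. rewrite m_p2_term. rewrite <- tens_comp by tc.
  rewrite idl by tc. reflexivity.
Qed.

Lemma mi_p1 (X Y : Ob C) : mi X Y ;; (lid (F X) ** w Y) = Fm (cp1 X Y).
Proof. rewrite <- m_p1, <- lcompA by tc. rewrite mminv_mm, idl by tc. reflexivity. Qed.
Lemma mi_p2 (X Y : Ob C) : mi X Y ;; (w X ** lid (F Y)) = Fm (cp2 X Y).
Proof. rewrite <- m_p2, <- lcompA by tc. rewrite mminv_mm, idl by tc. reflexivity. Qed.

Lemma Fw (X Y : Ob C) (f : Hom C X Y) : Fm f ;; w Y = w X.
Proof. unfold wmap. rewrite <- lcompA by tc. rewrite <- Fm_comp, (cbang_uniq (ccomp f (cbang Y))). reflexivity. Qed.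

Lemma c_wl (X : Ob C) : c X ;; (w X ** lid (F X)) = lid (F X).
Proof.
  unfold cmap at 1. rewrite lcompA by tc. rewrite mi_p2, <- Fm_comp.
  replace (ccomp (cdiag X) (cp2 X X)) with (cid X) by cart. apply Fm_id.
Qed.
Lemma c_wr (X : Ob C) : c X ;; (lid (F X) ** w X) = lid (F X).
Proof.
  unfold cmap at 1. rewrite lcompA by tc. rewrite mi_p1, <- Fm_comp.
  replace (ccomp (cdiag X) (cp1 X X)) with (cid X) by cart. apply Fm_id.
Qed.

Lemma c_nat (X Y : Ob C) (f : Hom C X Y) : Fm f ;; c Y = c X ;; (Fm f ** Fm f).
Proof.
  unfold cmap. rewrite <- lcompA by tc. rewrite <- Fm_comp. rewrite lcompA by tc.
  rewrite mi_nat, <- lcompA by tc. rewrite <- Fm_comp. f_equal. f_equal. cart.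
Qed.

Lemma ww (X Y : Ob C) : w X ** w Y = (lid (F X) ** w Y) ;; w X.
Proof. rewrite tens_splitr. rewrite wmap_dom, wmap_cod, tensA_unitr. reflexivity. Qed.

Lemma m_w (X Y : Ob C) : m X Y ;; w (cprod C X Y) = w X ** w Y.
Proof. rewrite <- (Fw (cp1 X Y)), <- lcompA by tc. rewrite m_p1, ww. reflexivity. Qed.

Lemma c_ww (X : Ob C) : c X ;; (w X ** w X) = w X.
Proof. rewrite ww, <- lcompA by tc. rewrite c_wr, idl by tc. reflexivity. Qed.

Lemma c_Fp (X Y : Ob C) : c (cprod C X Y) ;; (Fm (cp1 X Y) ** Fm (cp2 X Y)) = mi X Y.
Proof.
  unfold cmap. rewrite lcompA by tc. rewrite mi_nat, <- lcompA by tc. rewrite <- Fm_comp.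
  replace (ccomp (cdiag (cprod C X Y)) (cprodm (cp1 X Y) (cp2 X Y))) with (cid (cprod C X Y)) by cart.
  rewrite Fm_id, idl by tc. reflexivity.
Qed.

Lemma mi_m_assoc (X Y Z : Ob C) :
  (mi X Y ** lid (F Z)) ;; (lid (F X) ** m Y Z) ;; m X (cprod C Y Z)
  = m (cprod C X Y) Z ;; Fm (cassoc X Y Z).
Proof.
  rewrite lcompA by tc. rewrite <- mm_assoc. rewrite <- !lcompA by tc.
  rewrite <- tens_comp by tc. rewrite mminv_mm, idl, tens_id, idl by tc. reflexivity.
Qed.

Lemma m_assoc_inv (X Y Z : Ob C) :
  (m X Y ** lid (F Z)) ;; m (cprod C X Y) Z
  = (lid (F X) ** m Y Z) ;; m X (cprod C Y Z) ;; Fm (ainv X Y Z).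
Proof.
  rewrite <- mm_assoc. rewrite lcompA by tc. rewrite <- Fm_comp.
  replace (ccomp (cassoc X Y Z) (ainv X Y Z)) with (cid (cprod C (cprod C X Y) Z)) by cart.
  rewrite Fm_id, idr by tc. reflexivity.
Qed.

Lemma mi_m_assoc_inv (X Y Z : Ob C) :
  (lid (F X) ** mi Y Z) ;; (m X Y ** lid (F Z)) ;; m (cprod C X Y) Z
  = m X (cprod C Y Z) ;; Fm (ainv X Y Z).
Proof.
  rewrite lcompA by tc. rewrite m_assoc_inv. rewrite <- !lcompA by tc.
  rewrite <- tens_comp by tc. rewrite mminv_mm, idl, tens_id, idl by tc. reflexivity.
Qed.

End LNL.

Section Main.
Variables (C : cartesian_cat) (L : smcat) (Ad : lnl C L) (X J : Ob C).
Local Notation F := (Fo Ad).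
Local Notation Fm := (Fm Ad).
Local Notation m := (mm Ad).
Local Notation mi := (mminv Ad).
Local Notation w := (wmap Ad).
Local Notation c := (cmap Ad).
Local Notation XJ := (cprod C X J).

Lemma m_cancel (Y Z : Ob C) f g : lcod f = tens (F Y) (F Z) -> lcod g = tens (F Y) (F Z) ->
  f ;; m Y Z = g ;; m Y Z -> f = g.
Proof.
  intros Hf Hg H. rewrite <- (idr Hf), <- (idr Hg), <- mm_mminv.
  rewrite <- !lcompA by tc. rewrite H. reflexivity.
Qed.

Definition delta : Hom C XJ (cprod C J XJ) := cpair (cp2 X J) (cid XJ).

Lemma D0 : (lid (F X) ** c J) ;; (lsym (F X) (F J) ** lid (F J)) ;; (lid (F J) ** m X J)
   = m X J ;; Fm delta ;; mi J XJ.
Proof.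
  apply (@m_cancel J XJ); [tc | tc |].
  rewrite (lcompA (f := m X J ;; Fm delta)) by tc. rewrite mminv_mm, idr by tc.
  rewrite (lcompA (g := lid (F J) ** m X J)) by tc. rewrite <- mm_assoc.
  rewrite <- !lcompA by tc.
  rewrite (lcompA (f := lid (F X) ** c J)) by tc.
  rewrite tens_merge by tc. rewrite mm_sym, idl by tc.
  rewrite tens_compl by tc.
  replace (Fm (cswap X J) ** lid (F J)) with (Fm (cswap X J) ** Fm (cid J)) by (rewrite Fm_id; reflexivity).
  rewrite <- !lcompA by tc.
  rewrite (lcompA (g := Fm (cswap X J) ** Fm (cid J))) by tc.
  rewrite mm_nat. rewrite <- !lcompA by tc.
  rewrite (lcompA (f := lid (F X) ** c J)) by tc.
  unfold cmap. rewrite tens_compr by tc. rewrite (lcompA (f := lid (F X) ** Fm (cdiag J))) by tc.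
  rewrite <- (lcompA (f := lid (F X) ** mi J J)) by tc.
  rewrite (mi_m_assoc_inv Ad X J J).
  rewrite <- (lcompA (f := lid (F X) ** Fm (cdiag J))) by tc.
  replace (lid (F X) ** Fm (cdiag J)) with (Fm (cid X) ** Fm (cdiag J)) by (rewrite Fm_id; reflexivity).
  rewrite mm_nat.
  rewrite !lcompA by tc. rewrite <- !Fm_comp. f_equal. f_equal. unfold delta. cart.
Qed.

Definition Dm := m X J ;; Fm delta ;; mi J XJ.

Lemma Dm_dom : ldom Dm = tens (F X) (F J).
Proof. unfold Dm. tc. Qed.
Lemma Dm_cod : lcod Dm = tens (F J) (F XJ).
Proof. unfold Dm. tc. Qed.

Ltac dcextra ::= first [rewrite wmap_dom | rewrite wmap_cod | rewrite cmap_dom | rewrite cmap_cod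
  | rewrite Dm_dom | rewrite Dm_cod].

Lemma Sig_form A B u : ldom u = tens (F XJ) A ->
  fhom (Sigma Ad X J) A B u = (Dm ** lid A) ;; (lid (F J) ** u).
Proof.
  intros Hu. cbn [fhom Sigma].
  rewrite tens_compr by tc.
  rewrite <- (tensA_assoc (lid (F J)) (m X J) (lid A)).
  rewrite <- (tensA_assoc (lid (F X)) (c J) (lid A)).
  rewrite (lid_tens (F J) A).
  rewrite <- (tensA_assoc (lsym (F X) (F J)) (lid (F J)) (lid A)).
  rewrite <- lcompA by tc.
  rewrite tens_merge by tc. rewrite tens_merge by tc.
  rewrite !idl by tc. rewrite D0. reflexivity.
Qed.

Lemma c_m (Y : Ob C) : c Y ;; m Y Y = Fm (cdiag Y).
Proof. unfold cmap. rewrite lcompA by tc. rewrite mminv_mm, idr by tc. reflexivity. Qed.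

Lemma lidF (Y : Ob C) : lid (F Y) = Fm (cid Y).
Proof. rewrite Fm_id. reflexivity. Qed.

Lemma A4 : (lid (F J) ** c XJ) ;; (lid (F J) ** m XJ XJ) ;; m J (cprod C XJ XJ)
  = m J XJ ;; Fm (cprodm (cid J) (cdiag XJ)).
Proof.
  rewrite <- tens_compr by tc. rewrite c_m, lidF, mm_nat. reflexivity.
Qed.

Lemma A3 : (c X ** lid (F J)) ;; (lid (F X) ** m X J) ;; m X XJ
  = m X J ;; Fm (cprodm (cdiag X) (cid J)) ;; Fm (cassoc X X J).
Proof.
  unfold cmap at 1. rewrite tens_compl by tc.
  rewrite (pre3 (mi_m_assoc Ad X X J)) by tc.
  rewrite <- lcompA by tc. rewrite (lidF J), mm_nat. reflexivity.
Qed.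

Lemma A2 : (lid (F X) ** Dm) ;; (m X J ** lid (F XJ)) ;; m XJ XJ
  = (lid (F X) ** m X J) ;; m X XJ ;; Fm (cprodm (cid X) delta) ;; Fm (ainv X J XJ).
Proof.
  unfold Dm. rewrite !tens_compr by tc.
  rewrite (pre3 (mi_m_assoc_inv Ad X J XJ)) by tc.
  rewrite <- lcompA by tc.
  assert (H : (lid (F X) ** Fm delta) ;; m X (cprod C J XJ) = m X XJ ;; Fm (cprodm (cid X) delta))
    by (rewrite (lidF X), mm_nat; reflexivity).
  rewrite (pre2 H) by tc.
  rewrite <- lcompA by tc. reflexivity.
Qed.

Lemma A1 : (Dm ** lid (F XJ)) ;; (lid (F J) ** m XJ XJ) ;; m J (cprod C XJ XJ)
  = (m X J ** lid (F XJ)) ;; m XJ XJ ;; Fm (cprodm delta (cid XJ)) ;; Fm (cassoc J XJ XJ).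
Proof.
  unfold Dm. rewrite !tens_compl by tc.
  rewrite (pre3 (mi_m_assoc Ad J XJ XJ)) by tc.
  rewrite <- lcompA by tc.
  assert (H : (Fm delta ** lid (F XJ)) ;; m (cprod C J XJ) XJ = m XJ XJ ;; Fm (cprodm delta (cid XJ)))
    by (rewrite (lidF XJ), mm_nat; reflexivity).
  rewrite (pre2 H) by tc.
  rewrite <- lcompA by tc. reflexivity.
Qed.

Lemma K : (c X ** lid (F J)) ;; (lid (F X) ** Dm) ;; (Dm ** lid (F XJ)) = Dm ;; (lid (F J) ** c XJ).
Proof.
  apply (iso_cancel_r (h := (lid (F J) ** m XJ XJ) ;; m J (cprod C XJ XJ))
                      (h' := mi J (cprod C XJ XJ) ;; (lid (F J) ** mi XJ XJ)));
    [ tc | | unfold Dm; tc | unfold Dm; tc | ].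
  { rewrite lcompA by tc. rewrite <- (lcompA (f := m J (cprod C XJ XJ))) by tc.
    rewrite mm_mminv, idl by tc. rewrite <- tens_comp by tc. rewrite mm_mminv, idl, tens_id by tc.
    f_equal. tc. }
  rewrite <- !lcompA by (unfold Dm; tc).
  rewrite (pre3 A1) by (unfold Dm; tc).
  rewrite <- !lcompA by (unfold Dm; tc).
  rewrite (pre3 A2) by (unfold Dm; tc).
  rewrite <- !lcompA by tc.
  rewrite A3.
  rewrite (pre3 A4) by (unfold Dm; tc).
  unfold Dm. rewrite <- !lcompA by tc.
  rewrite (pre2 (mminv_mm Ad J XJ)) by tc. rewrite idr by tc.
  rewrite !lcompA by tc. rewrite <- !Fm_comp. f_equal. f_equal. unfold delta. cart.
Qed.

Lemma E_eq : c XJ ;; (Fm (cp2 X J) ** lid (F XJ)) = Fm delta ;; mi J XJ.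
Proof.
  unfold cmap. rewrite (lidF XJ). rewrite lcompA by tc. rewrite mi_nat, <- lcompA by tc.
  rewrite <- Fm_comp. f_equal. f_equal. unfold delta. cart.
Qed.

Lemma mi_Dm : mi X J ;; Dm = Fm delta ;; mi J XJ.
Proof. unfold Dm. rewrite <- !lcompA by tc. rewrite mminv_mm, idl by tc. reflexivity. Qed.

Lemma Dm_w : Dm ;; (w J ** lid (F XJ)) = m X J.
Proof.
  unfold Dm. rewrite lcompA by tc. rewrite mi_p2. rewrite lcompA by tc. rewrite <- Fm_comp.
  replace (ccomp delta (cp2 J XJ)) with (cid XJ) by (unfold delta; cart).
  rewrite Fm_id, idr by tc. reflexivity.
Qed.

Lemma Dm_w2 : Dm ;; (lid (F J) ** w XJ) = w X ** lid (F J).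
Proof.
  unfold Dm. rewrite lcompA by tc. rewrite mi_p1. rewrite lcompA by tc. rewrite <- Fm_comp.
  replace (ccomp delta (cp1 J XJ)) with (cp2 X J) by (unfold delta; cart).
  apply m_p2.
Qed.

Lemma Sig_form' A u : ldom u = tens (F XJ) A ->
  (lid (F X) ** c J ** lid A) ;; (lsym (F X) (F J) ** lid (tens (F J) A)) ;;
  (lid (F J) ** ((m X J ** lid A) ;; u)) = (Dm ** lid A) ;; (lid (F J) ** u).
Proof. intros Hu. exact (Sig_form A Hu). Qed.

Lemma G_id A : (Dm ** lid A) ;; (lid (F J) ** (w XJ ** lid A)) = w X ** lid (tens (F J) A).
Proof.
  rewrite <- (tensA_assoc (lid (F J)) (w XJ) (lid A)).
  rewrite tens_merge by tc. rewrite idl by tc. rewrite Dm_w2, tensA_assoc, <- lid_tens. reflexivity.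
Qed.

Lemma nu_eq A : nu Ad X J A = Fm (cp2 X J) ** lid A.
Proof.
  unfold nu. rewrite (lid_tens (F J) A), <- tensA_assoc, tens_merge by tc.
  rewrite mi_p2, idl by tc. reflexivity.
Qed.

Lemma L_cw (Y : Ob C) a u k : ldom u = tens (F Y) a -> lcod u = ldom k ->
  (c Y ** lid a) ;; (lid (F Y) ** u) ;; (w Y ** k) = u ;; k.
Proof.
  intros Hu Hk. rewrite lcompA by tc. rewrite tens_merge by tc. rewrite idl by tc.
  rewrite (tens_splitl (w Y) (u ;; k)). rewrite wmap_cod, tensA_unitl.
  rewrite <- lcompA by tc. replace (ldom (u ;; k)) with (tens (F Y) a) by (symmetry; tc).
  rewrite (lid_tens (F Y) a), <- tensA_assoc, tens_merge by tc.
  rewrite c_wl, idl, tens_id, idl by tc. reflexivity.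
Qed.

Lemma SigW A h b : ldom h = tens (F XJ) A -> lcod h = b ->
  (Dm ** lid A) ;; (lid (F J) ** h) ;; (w J ** lid b) = (m X J ** lid A) ;; h.
Proof.
  intros Hh Hb. subst b. rewrite lcompA by tc. rewrite xch by tc. rewrite <- lcompA by tc.
  rewrite wmap_cod, tensA_unitl. rewrite Hh. rewrite (lid_tens (F XJ) A), <- tensA_assoc.
  rewrite tens_merge by tc. rewrite Dm_w, idl by tc. reflexivity.
Qed.

Lemma G16 B : (c XJ ** lid B) ;; (Fm (cid XJ) ** (Fm (cp2 X J) ** lid B)) ;;
   ((Fm (cp1 X J) ** lid (tens (F J) B)) ;; (w X ** w J ** lid B)) = w XJ ** lid B.
Proof.
  rewrite Fm_id. rewrite <- lcompA by tc. rewrite (lcompA (f := c XJ ** lid B)) by tc.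
  rewrite tens_merge by tc. rewrite idl, idr by tc.
  rewrite (lcompA (f := c XJ ** lid B)) by tc.
  rewrite (tens_merge (f := Fm (cp1 X J))) by tc. rewrite (tens_merge (f := Fm (cp2 X J))) by tc. rewrite !Fw, idl by tc.
  rewrite <- tensA_assoc, tens_merge by tc. rewrite c_ww, idl by tc. reflexivity.
Qed.

Lemma G7 A : (Fm (cp1 X J) ** lid A) ;; (w X ** lid A) = w XJ ** lid A.
Proof. rewrite tens_merge by tc. rewrite Fw, idl by tc. reflexivity. Qed.

Definition SigE A u := (lid (F X) ** c J ** lid A) ;; (lsym (F X) (F J) ** lid (tens (F J) A)) ;;
  (lid (F J) ** ((m X J ** lid A) ;; u)).

Lemma G15 A : LS_comp_snd Ad (tens (F J) A) (cid X) (SigE A (nu Ad X J A)) (mu Ad X J (tens (F J) A))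
  = LS_id_snd Ad X (tens (F J) A).
Proof.
  unfold LS_comp_snd, SigE, mu, LS_id_snd. rewrite Fm_id.
  rewrite Sig_form' by (unfold nu; tc).
  rewrite L_cw by (unfold nu; tc).
  rewrite nu_eq. rewrite (SigW (A := A)) by tc.
  rewrite tens_merge by tc. rewrite m_p2, idl by tc. rewrite tensA_assoc, tens_id. reflexivity.
Qed.

Lemma G14 B B' g : ldom g = tens (F X) B -> lcod g = B' ->
  LS_comp_snd Ad (tens (F J) B) (cid X) (SigE B ((Fm (cp1 X J) ** lid B) ;; g)) (mu Ad X J B')
  = LS_comp_snd Ad (tens (F J) B) (cid X) (mu Ad X J B) g.
Proof.
  intros Hg Hg'. unfold LS_comp_snd, SigE, mu. rewrite Fm_id.
  rewrite Sig_form' by tc.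
  rewrite L_cw by tc.
  rewrite (SigW (A := B)) by tc.
  rewrite <- lcompA by tc. rewrite tens_merge by tc. rewrite m_p1, idl by tc.
  rewrite <- (tensA_assoc (lid (F X)) (w X)). rewrite tens_merge by tc.
  rewrite c_wr, idl by tc. rewrite tensA_assoc. reflexivity.
Qed.

Lemma G13 A A' f : ldom f = tens (F XJ) A -> lcod f = A' ->
  LS_comp_snd Ad A (cid XJ) f (nu Ad X J A')
  = LS_comp_snd Ad A (cid XJ) (nu Ad X J A) ((Fm (cp1 X J) ** lid (tens (F J) A)) ;; SigE A f).
Proof.
  intros Hf Hf'. unfold LS_comp_snd, SigE. rewrite Fm_id.
  rewrite Sig_form' by tc. rewrite !nu_eq.
  transitivity (((Fm delta ;; mi J XJ) ** lid A) ;; (lid (F J) ** f)).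
  - rewrite lcompA by tc. rewrite xch by tc. rewrite Hf, Fm_cod. rewrite <- lcompA by tc.
    rewrite (lid_tens (F XJ) A), <- tensA_assoc. rewrite tens_merge by tc. rewrite idl by tc.
    rewrite E_eq. reflexivity.
  - rewrite <- !lcompA by tc. rewrite (lcompA (f := c XJ ** lid A)) by tc.
    rewrite (tens_merge (f := lid (F XJ))) by tc. rewrite idl, idr by tc.
    rewrite <- tensA_assoc. rewrite (tens_merge (f := c XJ)) by tc. rewrite c_Fp, idl by tc.
    rewrite (tens_merge (f := mi X J)) by tc. rewrite mi_Dm, idl by tc. reflexivity.
Qed.

Lemma G8 A B D f g : ldom f = tens (F X) A -> lcod f = B -> ldom g = tens (F X) B -> lcod g = D ->
  (Fm (cp1 X J) ** lid A) ;; LS_comp_snd Ad A (cid X) f g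
  = LS_comp_snd Ad A (cid XJ) ((Fm (cp1 X J) ** lid A) ;; f) ((Fm (cp1 X J) ** lid B) ;; g).
Proof.
  intros Hf Hf' Hg Hg'. unfold LS_comp_snd. rewrite !Fm_id.
  transitivity ((c XJ ** lid A) ;; ((Fm (cp1 X J) ** Fm (cp1 X J)) ** lid A) ;; (lid (F X) ** f) ;; g).
  - rewrite <- !lcompA by tc. rewrite (tens_merge (f := Fm (cp1 X J))) by tc.
    rewrite c_nat, idl by tc. rewrite tens_compl by tc. reflexivity.
  - rewrite tens_compr by tc. rewrite <- !lcompA by tc.
    rewrite (lcompA (g := lid (F XJ) ** f)) by tc.
    rewrite (xch (u := f)) by tc. rewrite Hf, Fm_cod. rewrite <- lcompA by tc.
    rewrite (lcompA (g := lid (F XJ) ** (Fm (cp1 X J) ** lid A))) by tc.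
    rewrite (tens_merge (f := lid (F XJ))) by tc. rewrite idl, idr by tc.
    rewrite <- tensA_assoc. try (rewrite <- !lcompA by tc). reflexivity.
Qed.

Lemma G4 A B D u v : ldom u = tens (F XJ) A -> lcod u = B -> ldom v = tens (F XJ) B -> lcod v = D ->
  SigE A (LS_comp_snd Ad A (cid XJ) u v)
  = LS_comp_snd Ad (tens (F J) A) (cid X) (SigE A u) (SigE B v).
Proof.
  intros Hu Hu' Hv Hv'. unfold LS_comp_snd, SigE. rewrite !Fm_id.
  rewrite !Sig_form' by tc.
  transitivity (((Dm ;; (lid (F J) ** c XJ)) ** lid A) ;; (lid (tens (F J) (F XJ)) ** u) ;; (lid (F J) ** v)).
  - rewrite !tens_compr by tc.
    rewrite <- (tensA_assoc (lid (F J)) (c XJ) (lid A)).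
    rewrite <- (tensA_assoc (lid (F J)) (lid (F XJ)) u), tens_id.
    rewrite <- !lcompA by tc. rewrite (tens_merge (f := Dm)) by tc. rewrite idl by tc. reflexivity.
  - rewrite (tens_compr (f := Dm ** lid A)) by tc. rewrite <- !lcompA by tc.
    rewrite <- (tensA_assoc (lid (F X)) (lid (F J)) u), tens_id.
    rewrite (lcompA (g := lid (tens (F X) (F J)) ** u)) by tc.
    rewrite (xch (u := u)) by tc. rewrite Hu, Dm_cod. rewrite <- !lcompA by tc.
    rewrite (lid_tens (F J) A), (lid_tens (F XJ) A).
    rewrite <- (tensA_assoc (c X) (lid (F J)) (lid A)), <- (tensA_assoc (lid (F X)) Dm (lid A)),
      <- (tensA_assoc Dm (lid (F XJ)) (lid A)).
    rewrite (tens_merge (f := c X ** lid (F J))) by tc. rewrite idl by tc.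
    rewrite (tens_merge (f := (c X ** lid (F J)) ;; (lid (F X) ** Dm))) by tc. rewrite idl by tc.
    rewrite K. reflexivity.
Qed.
End Main.



Ltac dcextra ::= first [rewrite wmap_dom | rewrite wmap_cod | rewrite cmap_dom | rewrite cmap_cod].

Theorem proposition3p23 (C : cartesian_cat) (L : smcat) (Ad : lnl C L) (X J : Ob C) :
  is_adjunction (Sigma Ad X J) (reindex Ad (cp1 X J)) (nu Ad X J) (mu Ad X J).
Proof.
  unfold is_adjunction, is_functor.
  cbn [has_type LSfib fob fhom Sigma reindex pid pcomp].
  repeat split; intros;
    repeat match goal with H : _ /\ _ |- _ => destruct H end.
  - tc.
  - tc.
  - change (SigE Ad X J A (LS_id_snd Ad (cprod C X J) A) = LS_id_snd Ad X (tens (Fo Ad J) A)).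
    unfold SigE. rewrite Sig_form' by (unfold LS_id_snd; tc). unfold LS_id_snd. apply G_id.
  - eapply G4; eassumption.
  - tc.
  - tc.
  - unfold LS_id_snd. apply G7.
  - eapply G8; eassumption.
  - unfold nu; tc.
  - unfold nu; tc.
  - unfold mu; tc.
  - unfold mu; tc.
  - eapply G13; eassumption.
  - eapply G14; eassumption.
  - apply G15.
  - unfold LS_comp_snd, LS_id_snd, mu. rewrite nu_eq. apply G16.
Qed.
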